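(* Let $y,l,u\in\mathcal{R}(\mathbb{R}^{+},\mathbb{R})$ be such that $l\leq u$ and $l_0\leq y_0\leq u_0$. Let $(\xi,\kappa)$ be the solution of $RP_l(y)$. Then for all $t\geq0$, $$\alpha^{l}(y)_t\vee\beta^{u}_{l}(y)_t=\alpha^{l}(y)_t+\Theta^u_l(\xi)_t.$$
   Context: A function $f:\mathbb{R}^+=[0,\infty)\to\mathbb{R}$ is regulated if it has a left limit $f_{t^-}$ at every $t>0$ and a right limit $f_{t^+}$ at every $t\geq0$; $\mathcal{R}(\mathbb{R}^{+},\mathbb{R})$ is the set of regulated functions. $a\wedge b=\min(a,b)$, $a\vee b=\max(a,b)$, $a^+=a\vee0$. Maps: $\alpha^{l}(y)_t=\inf_{s\leq t}\big((y_s-l_s)\wedge(y_{s^+}-l_{s^+})\wedge 0\big)$; $\beta^{u}_{l}(y)_t=\sup_{s\leq t}\Big(\big((y_s-u_s)\vee(y_{s^+}-u_{s^+})\big)\wedge\inf_{s\leq r\leq t}\big[\big((y_r-l_r)\wedge(y_{r^+}-l_{r^+})\big)\vee(y_r-u_r)\big]\Big)$; $\Theta^{u}_{l}(f)_t=\sup_{s\leq t}\Big(\big((f_s-u_s)\vee(f_{s^+}-u_{s^+})\big)^+\wedge\inf_{s\leq r\leq t}\big[\big((f_r-l_r)\wedge(f_{r^+}-l_{r^+})\big)\vee(f_r-u_r)\big]\Big)$. One-barrier problem $RP_l(y)$ (for $y,l$ regulated with $y_0\geq l_0$): the unique pair $(\xi,\kappa)$ with $\xi=y+\kappa\geq l$,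 $\kappa$ non-decreasing, right-continuous, $\kappa_0=0$, and $\int_{[0,\infty[}(\xi_s-l_s)\wedge(\xi_{s^+}-l_{s^+})\,d\kappa_s=0$; explicitly $\kappa=-\alpha^l(y)$. *)

(* Defs.v *)
(* Functions on R^+ = [0,oo) are
   represented as functions R -> R whose values at negative arguments are
   irrelevant. *)
From HB Require Import structures.
From mathcomp Require Import all_boot all_order all_algebra.
From mathcomp Require Import all_classical all_reals all_analysis.
Set Implicit Arguments. Unset Strict Implicit. Unset Printing Implicit Defensive.
Import Order.TTheory GRing.Theory Num.Theory.
Import numFieldNormedType.Exports.
Local Open Scope classical_set_scope.
Local Open Scope ring_scope.

Section Defs.
Variable R : realType.

Definition regulated (f : R -> R) : Prop :=
  (forall t : R, 0 < t -> cvg (f x @[x --> t^'-])) /\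
  (forall t : R, 0 <= t -> cvg (f x @[x --> t^'+])).

Definition rlim (f : R -> R) (t : R) : R := lim (f x @[x --> t^'+]).

Definition alpha (l y : R -> R) (t : R) : R :=
  inf [set Num.min (Num.min (y s - l s) (rlim y s - rlim l s)) 0
      | s in [set s | 0 <= s <= t]].

Definition inner_inf (u l f : R -> R) (s t : R) : R :=
  inf [set Num.max (Num.min (f r - l r) (rlim f r - rlim l r)) (f r - u r)
      | r in [set r | s <= r <= t]].

Definition beta (u l y : R -> R) (t : R) : R :=
  sup [set Num.min (Num.max (y s - u s) (rlim y s - rlim u s))
                   (inner_inf u l y s t)
      | s in [set s | 0 <= s <= t]].

Definition Theta (u l f : R -> R) (t : R) : R :=
  sup [set Num.min (Num.max (Num.max (f s - u s) (rlim f s - rlim u s)) 0)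
                   (inner_inf u l f s t)
      | s in [set s | 0 <= s <= t]].

Definition ext0 (k : R -> R) (x : R) : R := if x < 0 then k 0 else k x.

(* (xi, kappa) solves the one-barrier reflection problem RP_l(y):
   xi = y + kappa >= l, kappa non-decreasing, right-continuous, kappa_0 = 0,
   and int_{[0,oo[} (xi_s - l_s) /\ (xi_{s+} - l_{s+}) dkappa_s = 0, the
   integral being against the Lebesgue-Stieltjes measure of kappa
   (extended by kappa_0 = 0 to the negative half-line). *)
Definition RP_sol (l y xi kappa : R -> R) : Prop :=
  (forall t, 0 <= t -> xi t = y t + kappa t) /\
  (forall t, 0 <= t -> l t <= xi t) /\
  (forall s t, 0 <= s <= t -> kappa s <= kappa t) /\
  (forall t, 0 <= t -> kappa x @[x --> t^'+] --> kappa t) /\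
  kappa 0 = 0 /\
  (exists k : cumulative R R, (forall x, k x = ext0 kappa x) /\
        (\int[lebesgue_stieltjes_measure k]_(s in [set s : R | (0 <= s)%R])
           (Num.min (xi s - l s) (rlim xi s - rlim l s))%R%:E = 0)%E).

End Defs.

(* Main.v *)
Require Import Defs.
From HB Require Import structures.
From mathcomp Require Import all_boot all_order all_algebra.
From mathcomp Require Import all_classical all_reals all_analysis.
From mathcomp Require Import ring lra.
Import Order.TTheory GRing.Theory Num.Theory.
Import numFieldNormedType.Exports.
Local Open Scope classical_set_scope.
Local Open Scope ring_scope.
Section P1.
Variable R : realType.

Lemma near_right_ex (x : R) (P : R -> Prop) :
  (\forall z \near x^'+, P z) -> exists2 d : R, 0 < d & forall z, x < z -> z < x + d -> P z.
Proof.
move=> [d d0 H]; exists d => // z xz zd; apply: H => //=.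
by rewrite distrC ger0_norm ?subr_ge0 ?ltW // ltrBlDl.
Qed.

Lemma near_left_ex (x : R) (P : R -> Prop) :
  (\forall z \near x^'-, P z) -> exists2 d : R, 0 < d & forall z, x - d < z -> z < x -> P z.
Proof.
move=> [d d0 H]; exists d => // z xz zd; apply: H => //=.
by rewrite ger0_norm ?subr_ge0 ?ltW // ltrBlDl addrC -ltrBlDl.
Qed.

Lemma cvg_bound_right (f : R -> R) x : cvg (f z @[z --> x^'+]) ->
  exists2 d : R, 0 < d & exists M, forall z, x < z -> z < x + d -> `|f z| <= M.
Proof.
move=> /cvg_ex [L HL].
have [d d0 Hd] := near_right_ex _ _ (cvgr_dist_lt _ _ HL 1 (@ltr01 R)).
exists d => //; exists (`|L| + 1) => z xz zd.
have := Hd z xz zd => h.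
have -> : f z = L - (L - f z) by rewrite opprB addrC subrK.
by rewrite (le_trans (ler_normB _ _)) // lerD2l ltW.
Qed.

Lemma cvg_bound_left (f : R -> R) x : cvg (f z @[z --> x^'-]) ->
  exists2 d : R, 0 < d & exists M, forall z, x - d < z -> z < x -> `|f z| <= M.
Proof.
move=> /cvg_ex [L HL].
have [d d0 Hd] := near_left_ex _ _ (cvgr_dist_lt _ _ HL 1 (@ltr01 R)).
exists d => //; exists (`|L| + 1) => z xz zd.
have := Hd z xz zd => h.
have -> : f z = L - (L - f z) by rewrite opprB addrC subrK.
by rewrite (le_trans (ler_normB _ _)) // lerD2l ltW.
Qed.

Lemma reg_local (f : R -> R) : regulated f -> forall x, 0 <= x ->
  exists2 d : R, 0 < d & exists M, forall z, 0 <= z -> x - d < z -> z < x + d -> `|f z| <= M.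
Proof.
move=> [Hl Hr] x x0.
have [d1 d10 [M1 H1]] := @cvg_bound_right f x (Hr x x0).
have [x0'|x0'] := eqVneq x 0.
  subst x; exists d1 => //; exists (Num.max M1 `|f 0|) => z z0 _ zd.
  have [->|zn] := eqVneq z 0; first by rewrite le_max lexx orbT.
  by rewrite le_max H1 // lt_neqAle eq_sym zn z0.
have xp : 0 < x by rewrite lt_neqAle eq_sym x0' x0.
have [d2 d20 [M2 H2]] := @cvg_bound_left f x (Hl x xp).
exists (Num.min d1 d2); first by rewrite lt_min d10 d20.
exists (Num.max (Num.max M1 M2) `|f x|) => z z0 zl zr.
have [zx|zx|->] := ltgtP z x; last by rewrite !le_max lexx !orbT.
  rewrite !le_max H2 ?orbT //.
  by apply: le_lt_trans zl; rewrite lerD2l lerN2 ge_min lexx orbT.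
rewrite !le_max H1 //.
by apply: (lt_le_trans zr); rewrite lerD2l ge_min lexx.
Qed.

Lemma reg_bounded (f : R -> R) : regulated f -> forall T, 0 <= T ->
  exists M, forall z, 0 <= z <= T -> `|f z| <= M.
Proof.
move=> Hf T T0.
pose G (x : R) := exists M, forall z, 0 <= z <= x -> `|f z| <= M.
pose E := [set x | 0 <= x <= T /\ G x].
have E0 : E 0.
  split; first by rewrite lexx T0.
  exists `|f 0| => z /andP[z0 z0']; by have -> : z = 0 by apply/eqP; rewrite eq_le z0 z0'.
have hsE : has_sup E by split; [exists 0 | exists T => x [/andP[_ ?] _]].
set m := sup E.
have m0 : 0 <= m by apply: ub_le_sup => //; case: hsE.
have mT : m <= T by apply: ge_sup; [exists 0 | move=> x [/andP[_ ?] _]].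
have [d d0 [M1 H1]] := @reg_local f Hf _ m0.
have [e Ee me] := sup_adherent (d0) hsE.
case: Ee => [/andP[e0 eT] [M2 H2]].
have Gm : G (Num.min (m + d / 2) T).
  exists (Num.max M1 M2) => z /andP[z0 zle].
  have [ze|ze] := leP z e; first by rewrite le_max H2 ?orbT // z0 ze.
  rewrite le_max H1 //; first by rewrite (lt_trans _ ze).
  apply: (le_lt_trans (le_trans zle (_ : _ <= m + d / 2))); first by rewrite ge_min lexx.
  by rewrite ltrD2l gtr_pMr // invf_lt1 // ltr1n.
have [hT|hT] := leP T (m + d / 2).
  by move: Gm; rewrite (min_r hT) => -[M HM]; exists M.
exfalso.
have : m + d / 2 <= m.
  apply: ub_le_sup; first by case: hsE.
  split; first by rewrite (ltW hT) andbT addr_ge0 // divr_ge0 // ltW.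
  by move: Gm; rewrite (min_l (ltW hT)).
by rewrite gerDl leNgt divr_gt0.
Qed.

End P1.

Section P2.
Variable R : realType.

Lemma rlim_bound (f : R -> R) : regulated f -> forall T, 0 <= T ->
  exists M, forall z, 0 <= z <= T -> `|f z| <= M /\ `|rlim f z| <= M.
Proof.
move=> Hf T T0.
have [M HM] := @reg_bounded R f Hf (T + 1) (addr_ge0 T0 ler01).
exists M => z /andP[z0 zT]; split; first by apply: HM; rewrite z0 (le_trans zT) // lerDl.
have Hc := (proj2 Hf) z z0.
have near1 : \forall w \near z^'+, `|f w| <= M.
  near=> w; apply: HM; apply/andP; split.
    by apply: (le_trans z0); apply: ltW; near: w; exact: nbhs_right_gt.
  apply: ltW; apply: (@lt_le_trans _ _ (z + 1)); last by rewrite lerD2r.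
  by near: w; apply: nbhs_right_lt; rewrite ltrDl.
rewrite ler_norml; apply/andP; split.
  apply: limr_ge => //; near=> w.
  have : `|f w| <= M by near: w.
  by rewrite ler_norml => /andP[].
apply: limr_le => //; near=> w.
have : `|f w| <= M by near: w.
by rewrite ler_norml => /andP[].
Unshelve. all: by end_near.
Qed.

Lemma rlim_sum (y k xi : R -> R) r : 0 <= r -> cvg (y z @[z --> r^'+]) ->
  k z @[z --> r^'+] --> k r -> (forall z, 0 <= z -> xi z = y z + k z) ->
  xi z @[z --> r^'+] --> rlim y r + k r.
Proof.
move=> r0 Hy Hk Hxi.
have H : (y \+ k) z @[z --> r^'+] --> rlim y r + k r by apply: cvgD.
apply: cvg_trans H; apply: near_eq_cvg; near=> z.
rewrite Hxi //; apply: (le_trans r0); apply: ltW; near: z; exact: nbhs_right_gt.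
Unshelve. all: by end_near.
Qed.

Lemma rlim_le (f g : R -> R) r : cvg (f z @[z --> r^'+]) -> cvg (g z @[z --> r^'+]) ->
  (forall z, r < z -> f z <= g z) -> rlim f r <= rlim g r.
Proof.
move=> Hf Hg H; apply: ler_lim => //; near=> z; apply: H.
near: z; exact: nbhs_right_gt.
Unshelve. all: by end_near.
Qed.

End P2.

Section P3.
Variable R : realType.

Lemma int_lb (k : cumulative R R) (f : R -> R) (A : set R) (eps : R) :
  measurable (A : set (measurableTypeR R)) -> A `<=` [set s : R | 0 <= s] -> 0 < eps ->
  (forall x, 0 <= x -> 0 <= f x) -> (forall x, A x -> eps <= f x) ->
  (eps%:E * lebesgue_stieltjes_measure k A <=
   \int[lebesgue_stieltjes_measure k]_(s in [set s : R | (0 <= s)%R]) (f s)%:E)%E.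
Proof.
move=> mA AD e0 f0 fA.
rewrite ge0_integralE; last by move=> x /= x0; rewrite lee_fin f0.
apply: ereal_sup_ubound => /=.
exists (scale_nnsfun (indic_nnsfun R mA) (ltW e0)).
  move=> x /=; rewrite /patch /= /measurable_realfun.mindic indicE.
  case: ifPn => [/set_mem xD|xD].
    have [xA|xA] := boolP (x \in A).
      by rewrite mulr1 lee_fin fA //; exact: set_mem.
    by rewrite mulr0 lee_fin f0 //; exact: set_mem.
  have [xA|xA] := boolP (x \in A).
    by exfalso; move/negP: xD; apply; apply/mem_set; apply: AD; exact: set_mem xA.
  by rewrite mulr0.
rewrite sintegralrM.
by rewrite sintegral_indic.
Qed.

End P3.

Section P4.
Variable R : realType.

Lemma mitv (i : interval R) : measurable ([set` i] : set (measurableTypeR R)).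
Proof. exact: measurable_itv. Qed.

Lemma ls_oc (k : cumulative R R) (x y : R) : x <= y ->
  lebesgue_stieltjes_measure k (`]x, y] : set (measurableTypeR R)) = (k y - k x)%:E.
Proof.
move=> xy.
rewrite /lebesgue_stieltjes_measure /measure_extension /=.
rewrite measurable_mu_extE; last exact: is_ocitv.
exact: (wlength_itv_bnd k false false xy).
Qed.

Lemma ls_closed_ge (k : cumulative R R) (a t e : R) : a <= t ->
  (forall b, b < a -> k b <= k t - e) ->
  (e%:E <= lebesgue_stieltjes_measure k (`[a, t] : set (measurableTypeR R)))%E.
Proof.
move=> at0 Hb.
pose F (n : nat) : set (measurableTypeR R) := `]a - n.+1%:R^-1, t]%classic.
have Fle n : a - n.+1%:R^-1 <= t.
  by apply: le_trans at0; rewrite lerBlDr lerDl invr_ge0.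
have mF n : measurable (F n) by exact: mitv.
have mI : measurable (\bigcap_n F n) by exact: bigcap_measurable.
have ni : nonincreasing_seq F.
  move=> n m nm; apply/subsetPset => x; rewrite /F /= !in_itv /= => /andP[h ->].
  rewrite andbT; apply: le_lt_trans h; rewrite lerD2l lerN2.
  by rewrite lef_pV2 ?posrE // ler_nat.
have F0 : (lebesgue_stieltjes_measure k (F 0%N) < +oo)%E.
  by rewrite /F ls_oc // ltry.
have := nonincreasing_cvg_mu F0 mF mI ni => Hc.
have H1 : (e%:E <= lebesgue_stieltjes_measure k (\bigcap_n F n))%E.
  apply: (cvge_to_ge Hc); apply: nearW => n /=.
  rewrite /F ls_oc // lee_fin lerBrDl -lerBrDr.
  by apply: Hb; rewrite ltrBlDr ltrDl invr_gt0.
apply: (le_trans H1); apply: le_measure; [apply/mem_set; exact: mI|apply/mem_set; exact: mitv|].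
move=> x Hx; rewrite /= in_itv /=; apply/andP; split.
  rewrite leNgt; apply/negP => xa.
  have [n Hn] := ltr_add_invr xa.
  have := Hx n I; rewrite /F /= in_itv /= => /andP[h _].
  by move: Hn; rewrite addrC -ltrBrDl => Hn; have := lt_trans h Hn; rewrite ltxx.
by have := Hx 0%N I; rewrite /F /= in_itv /= => /andP[].
Qed.

End P4.

Section P5.
Variable R : realType.
Variables y l xi kappa : R -> R.
Hypothesis Hy : regulated y.
Hypothesis Hl : regulated l.
Hypothesis RP : RP_sol l y xi kappa.

Definition Dd (r : R) := Num.min (y r - l r) (rlim y r - rlim l r).

Lemma K1 {r : R} : 0 <= r -> xi r = y r + kappa r.
Proof. by case: RP => H _; apply: H. Qed.
Lemma K2 {r : R} : 0 <= r -> l r <= xi r.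
Proof. by case: RP => _ [H _]; apply: H. Qed.
Lemma K3 {s r : R} : 0 <= s -> s <= r -> kappa s <= kappa r.
Proof. by case: RP => _ [_ [H _]] s0 sr; apply: H; rewrite s0 sr. Qed.
Lemma K4 {r : R} : 0 <= r -> kappa x @[x --> r^'+] --> kappa r.
Proof. by case: RP => _ [_ [_ [H _]]]; apply: H. Qed.
Lemma K5 : kappa 0 = 0.
Proof. by case: RP => _ [_ [_ [_ [H _]]]]. Qed.

Lemma kappa_ge0 {r : R} : 0 <= r -> 0 <= kappa r.
Proof. by move=> r0; rewrite -K5 K3. Qed.

Lemma xi_cvg {r : R} : 0 <= r -> xi z @[z --> r^'+] --> rlim y r + kappa r.
Proof. move=> r0; apply: rlim_sum => //; [exact: (proj2 Hy) | exact: K4 | move=> z; exact: K1]. Qed.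

Lemma rxi {r : R} : 0 <= r -> rlim xi r = rlim y r + kappa r.
Proof. by move=> r0; apply: cvg_lim => //; exact: xi_cvg. Qed.

Lemma minD (a b k : R) : Num.min (a + k) (b + k) = Num.min a b + k.
Proof. case: (leP a b) => h; first by rewrite !min_l // lerD2r.
by rewrite !min_r // ?lerD2r ltW. Qed.

Lemma maxD (a b k : R) : Num.max (a + k) (b + k) = Num.max a b + k.
Proof. case: (leP a b) => h; first by rewrite !max_r // lerD2r.
by rewrite !max_l // ?lerD2r ltW. Qed.

Lemma minxi {r : R} : 0 <= r -> Num.min (xi r - l r) (rlim xi r - rlim l r) = Dd r + kappa r.
Proof.
move=> r0; rewrite rxi // K1 // /Dd -minD; congr Num.min; ring.
Qed.

Lemma Dk {r : R} : 0 <= r -> 0 <= Dd r + kappa r.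
Proof.
move=> r0; rewrite -minxi // le_min !subr_ge0 K2 //=.
apply: rlim_le; [exact: (proj2 Hl) | by apply/cvg_ex; exists (rlim y r + kappa r); exact: xi_cvg |].
move=> z rz; apply: K2; exact: le_trans r0 (ltW rz).
Qed.


Lemma norm_min_le (a b M : R) : `|a| <= M -> `|b| <= M -> `|Num.min a b| <= M.
Proof. by move=> ha hb; case: (leP a b). Qed.
Lemma norm_max_le (a b M : R) : `|a| <= M -> `|b| <= M -> `|Num.max a b| <= M.
Proof. by move=> ha hb; case: (leP a b). Qed.
Lemma norm_sub_le (a b Ma Mb : R) : `|a| <= Ma -> `|b| <= Mb -> `|a - b| <= Ma + Mb.
Proof. by move=> ha hb; rewrite (le_trans (ler_normB _ _)) // lerD. Qed.

Variable t : R.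
Hypothesis t0 : 0 <= t.

Lemma D_bound : exists M, forall z, 0 <= z <= t -> `|Dd z| <= M.
Proof.
have [My HMy] := @rlim_bound R y Hy t t0.
have [Ml HMl] := @rlim_bound R l Hl t t0.
exists (My + Ml) => z hz; have [h1 h2] := HMy z hz; have [h3 h4] := HMl z hz.
by apply: norm_min_le; apply: norm_sub_le.
Qed.

Definition I0 := [set s : R | 0 <= s <= t].
Definition Aset := [set Num.min (Dd s) 0 | s in I0].

Lemma alphaE : alpha l y t = inf Aset.
Proof. by []. Qed.

Lemma Aset_lb : has_lbound Aset.
Proof.
have [M HM] := D_bound; exists (- M) => _ [s hs <-].
have := HM s hs; rewrite ler_norml => /andP[h _].
by rewrite le_min h /= lerNl oppr0 (le_trans _ (HM s hs)).
Qed.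

Lemma alpha_le {s : R} : 0 <= s <= t -> alpha l y t <= Num.min (Dd s) 0.
Proof. by move=> hs; rewrite alphaE; apply: ge_inf; [exact: Aset_lb | exists s]. Qed.

Lemma alpha_le0 : alpha l y t <= 0.
Proof. by apply: (le_trans (@alpha_le 0 _)); rewrite ?lexx ?t0 // ge_min lexx orbT. Qed.

Lemma alpha_ge : - kappa t <= alpha l y t.
Proof.
rewrite alphaE; apply: lb_le_inf; first by exists (Num.min (Dd 0) 0), 0 => //; rewrite /I0 /= lexx t0.
move=> _ [s /andP[s0 st] <-]; rewrite le_min; apply/andP; split; last by rewrite lerNl oppr0 kappa_ge0.
have := Dk s0; have := K3 s0 st; lra.
Qed.

Lemma kappa_le : kappa t <= - alpha l y t.
Proof.
set c := - alpha l y t.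
have c0 : 0 <= c by rewrite /c lerNr oppr0 alpha_le0.
rewrite leNgt; apply/negP => ct.
set e := (kappa t - c) / 2.
have e0 : 0 < e by rewrite /e divr_gt0 // subr_gt0.
have ke : kappa t - e = c + e by rewrite /e; field.
pose B := [set r : R | 0 <= r <= t /\ c + e <= kappa r].
have Bt : B t by split; [rewrite lexx t0 | rewrite -ke gerBl ltW].
have Blb : has_lbound B by exists 0 => r [/andP[]].
set a := inf B.
have at0 : a <= t by apply: ge_inf.
have a0 : 0 <= a by apply: lb_le_inf; [exists t | move=> r [/andP[]]].
have Hgt r : a < r -> r <= t -> c + e <= kappa r.
  move=> ar rt; have [r' [/andP[r'0 _] hr'] r'r] := inf_lt (ex_intro _ t Bt) ar.
  by apply: (le_trans hr'); apply: K3 => //; apply: ltW.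
have Ha : c + e <= kappa a.
  have [at'|at'] := eqVneq a t; first by rewrite at'; case: Bt.
  have at'' : a < t by rewrite lt_neqAle at' at0.
  apply: (cvgr_to_ge (K4 a0)); near=> w; apply: Hgt.
    by near: w; exact: nbhs_right_gt.
  by apply: ltW; near: w; exact: nbhs_right_lt.
have Hlt r : 0 <= r -> r < a -> kappa r < c + e.
  move=> r0 ra; rewrite ltNge; apply/negP => h.
  have : a <= r by apply: ge_inf => //; split => //; rewrite r0 (le_trans (ltW ra)).
  by rewrite leNgt ra.
have ap : 0 < a.
  rewrite lt_neqAle a0 andbT; apply/negP => /eqP a0'.
  by move: Ha; rewrite -a0' K5; lra.
case: RP => _ [_ [_ [_ [_ [k [kE Hint]]]]]].
have Hmu : (e%:E <= lebesgue_stieltjes_measure k (`[a, t] : set (measurableTypeR R)))%E.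
  apply: ls_closed_ge => // b ba.
  rewrite !kE /ext0; have -> : (t < 0) = false by rewrite ltNge t0.
  case: ifPn => [b0|]; first by rewrite K5 ke; lra.
  by rewrite -leNgt => b0; rewrite ke; apply: ltW; apply: Hlt.
have Hlb := @int_lb R k (fun s => Num.min (xi s - l s) (rlim xi s - rlim l s))
  (`[a, t] : set (measurableTypeR R)) e (mitv _ _) _ e0.
have : (e%:E * lebesgue_stieltjes_measure k (`[a, t] : set (measurableTypeR R)) <= 0)%E.
  rewrite -Hint; apply: Hlb.
  - by move=> x; rewrite /= in_itv /= => /andP[h _]; apply: le_trans h.
  - by move=> x x0; rewrite minxi //; exact: Dk.
  - move=> x; rewrite /= in_itv /= => /andP[ax xt].
    have x0 : 0 <= x by apply: le_trans ax.
    rewrite minxi //.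
    have := @alpha_le x (introT andP (conj x0 xt)).
    rewrite le_min => /andP[h _].
    have : c + e <= kappa x.
      have [ax2|ax'] := eqVneq a x; first by rewrite -ax2.
      by apply: Hgt => //; rewrite lt_neqAle ax' ax.
    rewrite /c in h *; lra.
apply/negP; rewrite -ltNge; apply: mule_gt0; first by rewrite lte_fin.
by apply: lt_le_trans Hmu; rewrite lte_fin.
Unshelve. all: by end_near.
Qed.

Lemma kappa_alpha : alpha l y t = - kappa t.
Proof. by apply/eqP; rewrite eq_le alpha_ge andbT lerNr kappa_le. Qed.


Variable u : R -> R.
Hypothesis Hu : regulated u.

Definition Pp (s : R) := Num.max (y s - u s) (rlim y s - rlim u s).
Definition Qq (r : R) := Num.max (Dd r) (y r - u r).
Definition Iv (s : R) := [set r : R | s <= r <= t].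
Definition Jj (s : R) := inner_inf u l y s t.
Definition Jx (s : R) := inner_inf u l xi s t.
Definition termT (s : R) := Num.min (Num.max (Num.max (xi s - u s) (rlim xi s - rlim u s)) 0) (Jx s).
Definition Bset := [set Num.min (Pp s) (Jj s) | s in I0].
Definition Tset := [set termT s | s in I0].

Lemma JjE s : Jj s = inf [set Qq r | r in Iv s].
Proof. by []. Qed.
Lemma betaE : beta u l y t = sup Bset.
Proof. by []. Qed.
Lemma ThetaE : Theta u l xi t = sup Tset.
Proof. by []. Qed.

Lemma all_bound : exists M, forall z, 0 <= z <= t -> `|Pp z| <= M /\ `|Qq z| <= M.
Proof.
have [My HMy] := @rlim_bound R y Hy t t0.
have [Ml HMl] := @rlim_bound R l Hl t t0.
have [Mu HMu] := @rlim_bound R u Hu t t0.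
set N := Num.max My (Num.max Ml Mu).
have HN (a : R) (M' : R) : `|a| <= M' -> (M' <= N) -> `|a| <= N by move=> h1 h2; apply: le_trans h2.
exists (N + N) => z hz.
have [h1 h2] := HMy z hz; have [h3 h4] := HMl z hz; have [h5 h6] := HMu z hz.
have eY : My <= N by rewrite le_max lexx.
have eL : Ml <= N by rewrite !le_max lexx orbT.
have eU : Mu <= N by rewrite !le_max lexx !orbT.
split; first by apply: norm_max_le; apply: norm_sub_le; apply: HN; eassumption.
apply: norm_max_le; last by apply: norm_sub_le; apply: HN; eassumption.
by apply: norm_min_le; apply: norm_sub_le; apply: HN; eassumption.
Qed.

Lemma Qx_E r : 0 <= r ->
  Num.max (Num.min (xi r - l r) (rlim xi r - rlim l r)) (xi r - u r) = Qq r + kappa r.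
Proof. by move=> r0; rewrite minxi // K1 // /Qq -maxD; congr Num.max; ring. Qed.

Lemma termT_E s : 0 <= s -> termT s = Num.min (Num.max (Pp s + kappa s) 0) (Jx s).
Proof.
move=> s0; rewrite /termT rxi // K1 // /Pp -maxD; congr (Num.min (Num.max (Num.max _ _) 0) _); ring.
Qed.

Lemma JxE s : 0 <= s -> Jx s = inf [set Qq r + kappa r | r in Iv s].
Proof.
move=> s0; rewrite /Jx /inner_inf; congr inf; apply/seteqP; split => _ [r hr <-];
  exists r => //; rewrite Qx_E //; case/andP: hr => h _; exact: le_trans h.
Qed.

Section inner.
Variable M : R.
Hypothesis HM : forall z, 0 <= z <= t -> `|Pp z| <= M /\ `|Qq z| <= M.

Lemma Q_lbound s : 0 <= s -> has_lbound [set Qq r | r in Iv s].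
Proof.
move=> s0; exists (- M) => _ [r /andP[sr rt] <-].
have [_ h] := HM r (introT andP (conj (le_trans s0 sr) rt)).
by move: h; rewrite ler_norml => /andP[].
Qed.

Lemma Jj_le {s r : R} : 0 <= s -> s <= r <= t -> Jj s <= Qq r.
Proof. by move=> s0 hr; rewrite JjE; apply: ge_inf; [exact: Q_lbound | exists r]. Qed.

Lemma Jx_ge {s r : R} : 0 <= s -> s <= r <= t -> Jj s + kappa r <= Jx r.
Proof.
move=> s0 /andP[sr rt]; have r0 := le_trans s0 sr.
rewrite JxE //; apply: lb_le_inf; first by exists (Qq r + kappa r), r => //; rewrite /Iv /= lexx rt.
move=> _ [r' /andP[rr' r't] <-]; apply: lerD; first by apply: Jj_le => //; rewrite (le_trans sr rr') r't.
exact: K3.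
Qed.

Lemma Qx_lbound s : 0 <= s -> has_lbound [set Qq r + kappa r | r in Iv s].
Proof.
move=> s0; exists 0 => _ [r /andP[sr rt] <-]; have r0 := le_trans s0 sr.
by apply: (le_trans (Dk r0)); rewrite lerD2r le_max lexx.
Qed.

Lemma Jx_le {s r : R} : 0 <= s -> s <= r <= t -> Jx s <= Qq r + kappa r.
Proof. by move=> s0 hr; rewrite JxE //; apply: ge_inf; [exact: Qx_lbound | exists r]. Qed.

Lemma Jx_ge0 {s : R} : 0 <= s <= t -> 0 <= Jx s.
Proof.
case/andP=> s0 st; rewrite JxE //; apply: lb_le_inf; first by exists (Qq s + kappa s), s => //; rewrite /Iv /= lexx st.
by move=> _ [r /andP[sr rt] <-]; apply: (le_trans (Dk (le_trans s0 sr))); rewrite lerD2r le_max lexx.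
Qed.

Lemma Jx_leJ {s : R} : 0 <= s <= t -> Jx s <= Jj s + kappa t.
Proof.
case/andP=> s0 st; rewrite -lerBlDr JjE; apply: lb_le_inf; first by exists (Qq s), s => //; rewrite /Iv /= lexx st.
move=> _ [r /andP[sr rt] <-]; rewrite lerBlDr; apply: (le_trans (Jx_le s0 (introT andP (conj sr rt)))).
by rewrite lerD2l; apply: K3 => //; exact: le_trans sr.
Qed.

Lemma Jj_leM {s : R} : 0 <= s <= t -> Jj s <= M.
Proof.
move=> hs; case/andP: (hs) => s0 st; apply: (le_trans (Jj_le s0 (introT andP (conj (lexx s) st)))).
by have [_ h] := HM s hs; move: h; rewrite ler_norml => /andP[].
Qed.

Lemma Bset_ub : has_ubound Bset.
Proof.
exists M => _ [s hs <-]; rewrite ge_min; apply/orP; right; exact: Jj_leM.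
Qed.

Lemma Tset_ub : has_ubound Tset.
Proof.
exists (M + kappa t) => _ [s hs <-]; case/andP: (hs) => s0 st.
rewrite termT_E // ge_min; apply/orP; right.
by apply: (le_trans (Jx_leJ hs)); rewrite lerD2r Jj_leM.
Qed.

Lemma termT_ge0 {s : R} : 0 <= s <= t -> 0 <= termT s.
Proof.
move=> hs; case/andP: (hs) => s0 st; rewrite termT_E // le_min le_max lexx orbT /=.
exact: Jx_ge0.
Qed.

Lemma le_Theta {s : R} : 0 <= s <= t -> termT s <= Theta u l xi t.
Proof. by move=> hs; rewrite ThetaE; apply: ub_le_sup; [exact: Tset_ub | exists s]. Qed.

Lemma Theta_ge0 : 0 <= Theta u l xi t.
Proof. by apply: le_trans (le_Theta (s:=0) _) ; rewrite ?termT_ge0 // lexx t0. Qed.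


Lemma le_beta {s : R} : 0 <= s <= t -> Num.min (Pp s) (Jj s) <= beta u l y t.
Proof. by move=> hs; rewrite betaE; apply: ub_le_sup; [exact: Bset_ub | exists s]. Qed.

Lemma Theta_le : Theta u l xi t <= Num.max (- kappa t) (beta u l y t) + kappa t.
Proof.
rewrite ThetaE; apply: ge_sup; first by exists (termT 0), 0 => //; rewrite /I0 /= lexx t0.
move=> _ [s hs <-]; case/andP: (hs) => s0 st; rewrite termT_E //.
have hk : kappa s <= kappa t := K3 s0 st.
have hj : Jx s <= Jj s + kappa t := Jx_leJ hs.
have hb := le_beta hs.
have hm1 : - kappa t <= Num.max (- kappa t) (beta u l y t) by rewrite le_max lexx.
have hm2 : beta u l y t <= Num.max (- kappa t) (beta u l y t) by rewrite le_max lexx orbT.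
have [h|h] := boolP (Pp s + kappa s <= 0).
  have t1 : Num.min (Num.max (Pp s + kappa s) 0) (Jx s) <= 0.
    by rewrite ge_min; apply/orP; left; rewrite ge_max h lexx.
  lra.
rewrite -ltNge in h.
have t1 : Num.min (Num.max (Pp s + kappa s) 0) (Jx s) <= Pp s + kappa s.
  by rewrite ge_min; apply/orP; left; rewrite ge_max lexx ltW.
have t2 : Num.min (Num.max (Pp s + kappa s) 0) (Jx s) <= Jx s by rewrite ge_min lexx orbT.
have t3 : Num.min (Num.max (Pp s + kappa s) 0) (Jx s) - kappa t <= Num.min (Pp s) (Jj s).
  rewrite le_min; apply/andP; split; lra.
lra.
Qed.

Lemma beta_le : beta u l y t <= - kappa t + Theta u l xi t.
Proof.
rewrite betaE; apply: ge_sup; first by exists (Num.min (Pp 0) (Jj 0)), 0 => //; rewrite /I0 /= lexx t0.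
move=> _ [s hs <-]; case/andP: (hs) => s0 st.
apply/ler_addgt0Pr => eps eps0.
have Th0 := Theta_ge0.
have m1 : Num.min (Pp s) (Jj s) <= Pp s by rewrite ge_min lexx.
have m2 : Num.min (Pp s) (Jj s) <= Jj s by rewrite ge_min lexx orbT.
have ks0 := kappa_ge0 s0.
case: (leP (kappa t - eps) (kappa s)) => hks.
  have := le_Theta hs; rewrite termT_E // => hT.
  have hj := @Jx_ge s s s0 (introT andP (conj (lexx s) st)).
  have : Num.min (Pp s) (Jj s) + kappa s <= Num.min (Num.max (Pp s + kappa s) 0) (Jx s).
    rewrite le_min; apply/andP; split; last by lra.
    by rewrite le_max; apply/orP; left; lra.
  lra.
have : alpha l y t < - kappa t + eps by rewrite kappa_alpha; lra.
rewrite alphaE => /(inf_lt (ex_intro _ _ (ex_intro2 _ _ 0 (introT andP (conj (lexx 0) t0)) erefl))).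
move=> [_ [r hr <-] hlt]; case/andP: (hr) => r0 rt.
have hD : Dd r < - kappa t + eps.
  move: hlt; rewrite gt_min => /orP[//|h]; lra.
have hDk := Dk r0.
have sr : s < r.
  rewrite ltNge; apply/negP => rs; have := K3 r0 rs; lra.
have hr' : s <= r <= t by rewrite (ltW sr) rt.
have hJ := Jj_le s0 hr'.
case: (leP (y r - u r) (Dd r)) => hq.
  move: hJ; rewrite /Qq (max_l hq) => hJ; lra.
move: hJ; rewrite /Qq (max_r (ltW hq)) => hJ.
have hP : y r - u r <= Pp r by rewrite /Pp le_max lexx.
have := le_Theta hr; rewrite termT_E // => hT.
have hj := Jx_ge s0 hr'.
have : Jj s + kappa r <= Num.min (Num.max (Pp r + kappa r) 0) (Jx r).
  rewrite le_min; apply/andP; split; last by lra.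
  by rewrite le_max; apply/orP; left; lra.
lra.
Qed.

End inner.

Lemma main_eq : Num.max (alpha l y t) (beta u l y t) = alpha l y t + Theta u l xi t.
Proof.
have [M HM] := all_bound.
have h1 := Theta_le M HM; have h2 := beta_le M HM; have h3 := Theta_ge0 M HM.
rewrite kappa_alpha; apply/eqP; rewrite eq_le; apply/andP; split.
  by rewrite ge_max; apply/andP; split; lra.
lra.
Qed.

End P5.


Theorem lemma3 (R : realType) (y l u xi kappa : R -> R) :
  regulated y -> regulated l -> regulated u ->
  (forall t, 0 <= t -> l t <= u t) ->
  l 0 <= y 0 -> y 0 <= u 0 ->
  RP_sol l y xi kappa ->
  forall t, 0 <= t ->
    Num.max (alpha l y t) (beta u l y t) = alpha l y t + Theta u l xi t.
Proof.
move=> Hy Hl Hu _ _ _ RP t t0.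
exact: (@main_eq R y l xi kappa Hy Hl RP t t0 u Hu).
Qed.
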